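(* Fix a rooted tree $T$ on $t\ge2$ vertices and let $G$ be a connected graph with at least $2t$ vertices. Then any two pendant copies of $T$ in $G$ that share at least one vertex have the same root.
   Context: A pendant copy of the rooted tree $T$ in $G$ is a set $S$ of $t$ vertices of $G$ together with a bijection from the vertices of $T$ to $S$ such that two vertices of $S$ are adjacent in $G$ if and only if the corresponding vertices of $T$ are adjacent, and no vertex of $S$ other than the image of the root (called the root of the copy) has a neighbour outside $S$. Equivalently, $G$ is obtained by identifying the root of $T$ with a vertex of a graph $H$. *)

(* Defs.v *)
From mathcomp Require Import all_boot.
Set Implicit Arguments. Unset Strict Implicit. Unset Printing Implicit Defensive.

Definition simple_graph (V : finType) (e : rel V) : Prop :=
  symmetric e /\ irreflexive e.

Definition connected_graph (V : finType) (e : rel V) : Prop :=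
  forall x y : V, connect e x y.

Definition has_cycle (V : finType) (e : rel V) : Prop :=
  exists (x : V) (p : seq V),
    [/\ 2 <= size p, uniq (x :: p), path e x p & e (last x p) x].

Definition is_tree (V : finType) (e : rel V) : Prop :=
  [/\ simple_graph e, connected_graph e & ~ has_cycle e].

Definition pendant_copy (T V : finType) (eT : rel T) (r : T) (eG : rel V)
    (f : T -> V) : Prop :=
  [/\ injective f,
      (forall x y : T, eG (f x) (f y) = eT x y) &
      (forall (x : T) (v : V), x != r -> eG (f x) v -> v \in codom f)].

(* Main.v *)
Require Import Defs.
From mathcomp Require Import all_boot.

Lemma closed_conn (V : finType) (e : rel V) (Q : pred V) :
  (forall u v, Q u -> e u v -> Q v) -> forall x y, connect e x y -> Q x -> Q y.
Proof.
move=> H x y /connectP [p pth ->]; elim: p x pth => //= a p IH x /andP[exa pa] Qx.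
exact: IH pa (H _ _ Qx exa).
Qed.

Lemma no_full (V : finType) (Q : pred V) : #|Q| < #|V| -> exists w, w \notin Q.
Proof.
move=> H; case: (pickP (predC Q)) => [w /= Hw|H0]; first by exists w.
have : V \subset Q by apply/subsetP => v _; move: (H0 v) => /= /negbFE.
by move/subset_leq_card; rewrite leqNgt H.
Qed.

Lemma arg1 (T : finType) (eT : rel T) (r : T) (V : finType) (eG : rel V)
  (f g : T -> V) : connected_graph eG -> #|T| < #|V| ->
  pendant_copy eT r eG f -> pendant_copy eT r eG g ->
  (exists x y : T, f x = g y) -> f r \notin codom g -> g r \in codom f.
Proof.
move=> conn lt [fi fe fp] [gi ge gp] [x [y fxy]] frB.
apply/negPn/negP => grA.
have [w Hw] : exists w, w \notin codom f by apply: no_full; rewrite card_codom.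
have Q := @closed_conn _ eG [pred v | (v \in codom f) && (v \in codom g)] _ _ _ (conn (f x) w).
move: Hw; rewrite (andP (Q _ _)).1 //.
- move=> u v /= /andP[/codomP[a ->] /codomP[b eb]] euv.
  apply/andP; split.
  + apply: (fp a) euv; apply/eqP => ar; move: frB; rewrite -ar eb.
    by rewrite codom_f.
  + rewrite eb in euv; apply: (gp b) euv; apply/eqP => br; move: grA.
    by rewrite -br -eb codom_f.
- by rewrite /= codom_f fxy codom_f.
Qed.

Lemma arg2 (T : finType) (eT : rel T) (r : T) (V : finType) (eG : rel V)
  (f g : T -> V) : connected_graph eT ->
  pendant_copy eT r eG f -> pendant_copy eT r eG g ->
  f r \in codom g -> g r \notin codom f -> False.
Proof.
move=> conn [fi fe fp] [gi ge gp] frB grA.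
have sub : codom f \subset codom g.
  apply/subsetP => v /codomP[s ->].
  apply: (@closed_conn _ eT [pred x | f x \in codom g] _ _ _ (conn r s)) => //.
  move=> a b /= /codomP[c ec] eab.
  have : eG (f a) (f b) by rewrite fe.
  rewrite ec; apply: gp; apply/eqP => cr; move: grA.
  by rewrite -cr -ec codom_f.
have := subset_cardP _ sub; rewrite !card_codom // => /(_ erefl).
move=> /(_ (g r)); rewrite codom_f => H.
by move: grA; rewrite H.
Qed.

Arguments arg1 {T eT r V eG f g}.
Arguments arg2 {T eT r V eG f g}.

Theorem lemma2p3 (T : finType) (eT : rel T) (r : T)
    (V : finType) (eG : rel V) :
  is_tree eT -> 2 <= #|T| ->
  simple_graph eG -> connected_graph eG -> 2 * #|T| <= #|V| ->
  forall f g : T -> V,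
    pendant_copy eT r eG f -> pendant_copy eT r eG g ->
    (exists x y : T, f x = g y) ->
    f r = g r.
Proof.
move=> [_ connT _] t2 _ conn tV f g pf pg sh.
case: (eqVneq (f r) (g r)) => // ne.
have ltV : #|T| < #|V| by apply: leq_trans tV; rewrite mul2n -addnn -addn1 leq_add2l ltnW.
have [frB|frB] := boolP (f r \in codom g).
- have [grA|grA] := boolP (g r \in codom f); last by case: (arg2 connT pf pg frB grA).
  exfalso.
  case: pf pg sh => [fi fe fp] [gi ge gp] [x [y fxy]].
  pose A : pred V := [pred v | v \in codom f].
  pose B : pred V := [pred v | v \in codom g].
  have [w Hw] : exists w, w \notin [predU A & B].
    apply: no_full.
    have := cardUI A B.
    have cA : #|A| = #|T| by rewrite -(card_codom fi); apply: eq_card.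
    have cB : #|B| = #|T| by rewrite -(card_codom gi); apply: eq_card.
    rewrite cA cB.
    have : 0 < #|[predI codom f & codom g]|.
      by apply/card_gt0P; exists (f x); rewrite !inE /= codom_f fxy codom_f.
    move=> H1 H2; apply: leq_trans tV; rewrite mul2n -addnn -H2.
    by rewrite -addn1 leq_add2l.
  move/negP: Hw; apply; apply: (@closed_conn _ eG [predU A & B] _ _ _ (conn (f x) w)).
  + move=> u v; rewrite !inE /= => /orP[/codomP[a ->]|/codomP[a ->]] euv.
    * have [ar|ar] := eqVneq a r.
      - rewrite ar in euv; case/codomP: frB => b eb; rewrite eb in euv.
        have br : b != r by apply: contraNneq ne => br; rewrite eb br.
        by rewrite (gp _ _ br euv) orbT.
      - by rewrite (fp _ _ ar euv).
    * have [ar|ar] := eqVneq a r.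
      - rewrite ar in euv; case/codomP: grA => b eb; rewrite eb in euv.
        have br : b != r by apply: contraNneq ne => br; rewrite eb br.
        by rewrite (fp _ _ br euv).
      - by rewrite (gp _ _ ar euv) orbT.
  + by rewrite !inE /= codom_f.
- have grA := arg1 conn ltV pf pg sh frB.
  by case: (arg2 connT pg pf grA frB).
Qed.
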